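(* Let $(G,\alpha,\mathcal A)$ and $(G,\beta,\mathcal B)$ be unital $C^*$-dynamical systems of a locally compact group $G$, let $E$ be a $\mathcal B$-$\mathcal A$ Hilbert bimodule which is full with respect to both inner products, and let $\eta$ be a $(\beta,\alpha)$-compatible action of $G$ on $E$. If $\alpha$ or $\beta$ is outer, then $\eta$ is outer.
   Context: A $\mathcal B$-$\mathcal A$ Hilbert bimodule $E$ is a left Hilbert $\mathcal B$-module (inner product ${}_{\mathcal B}\langle\cdot,\cdot\rangle$, linear in the first variable) and right Hilbert $\mathcal A$-module (inner product $\langle\cdot,\cdot\rangle_{\mathcal A}$) with ${}_{\mathcal B}\langle x,y\rangle z=x\langle y,z\rangle_{\mathcal A}$. Full means the inner products span dense subsets of $\mathcal B$, resp. $\mathcal A$. A $(\beta,\alpha)$-compatible action is a homomorphism $g\mapsto\eta_g$ into invertible linear maps of $E$ with $\eta_g(bx)=\beta_g(b)\eta_g(x)$, $\eta_g(xa)=\eta_g(x)\alpha_g(a)$, ${}_{\mathcal B}\langle\eta_gx,\eta_gy\rangle=\beta_g({}_{\mathcal B}\langle x,y\rangle)$, $\langle\eta_gx,\eta_gy\rangle_{\mathcal A}=\alpha_g(\langle x,y\rangle_{\mathcal A})$, and $g\mapsto\eta_g(x)$ continuous. For unitaries $u\in\mathcal A$, $u'\in\mathcal B$, $\mathrm{Ad}(u',u)(x):=u'^*xu$. The action $\eta$ is outer if for every $t\in G\setminus\{e\}$, $\eta_t\neq\mathrm{Ad}(u',u)$ for all unitaries $u\in\mathcal A$, $u'\in\mathcal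 B$. An action $\alpha$ on a unital $C^*$-algebra $\mathcal A$ is outer if for every $t\ne e$, $\alpha_t$ is not of the form $a\mapsto u^*au$ for a unitary $u\in\mathcal A$. *)

(* Defs.v *)
From mathcomp Require Import all_boot all_order all_algebra.
From mathcomp Require Import all_classical all_reals all_analysis.
From mathcomp Require Import complex.
Import Order.TTheory GRing.Theory Num.Theory.
Local Open Scope ring_scope.
Set Implicit Arguments.
Unset Strict Implicit.
Unset Printing Implicit Defensive.

Record unital_cstar (R : realType) := UnitalCstar {
  cs_sort :> completeNormedModType R[i];
  cs_mul : cs_sort -> cs_sort -> cs_sort;
  cs_one : cs_sort;
  cs_star : cs_sort -> cs_sort;
  cs_mulA : associative cs_mul;
  cs_mul1l : left_id cs_one cs_mul;
  cs_mul1r : right_id cs_one cs_mul;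
  cs_mulDl : left_distributive cs_mul +%R;
  cs_mulDr : right_distributive cs_mul +%R;
  cs_mulZl : forall (k : R[i]) a b, cs_mul (k *: a) b = k *: cs_mul a b;
  cs_mulZr : forall (k : R[i]) a b, cs_mul a (k *: b) = k *: cs_mul a b;
  cs_starK : involutive cs_star;
  cs_starD : forall a b, cs_star (a + b) = cs_star a + cs_star b;
  cs_starZ : forall (k : R[i]) a, cs_star (k *: a) = k^* *: cs_star a;
  cs_starM : forall a b, cs_star (cs_mul a b) = cs_mul (cs_star b) (cs_star a);
  cs_norm_mul : forall a b, `|cs_mul a b| <= `|a| * `|b|;
  cs_cstar_id : forall a, `|cs_mul (cs_star a) a| = `|a| ^+ 2
}.

Arguments cs_mul {R A} : rename.
Arguments cs_one {R} A : rename.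
Arguments cs_star {R A} : rename.

Definition unitary (R : realType) (A : unital_cstar R) (u : A) : Prop :=
  cs_mul (cs_star u) u = cs_one A /\ cs_mul u (cs_star u) = cs_one A.

Definition cs_positive (R : realType) (A : unital_cstar R) (a : A) : Prop :=
  exists c : A, a = cs_mul (cs_star c) c.

Definition star_automorphism (R : realType) (A : unital_cstar R) (f : A -> A)
  : Prop :=
  [/\ forall (k : R[i]) (a b : A), f (k *: a + b) = k *: f a + f b,
      forall a b : A, f (cs_mul a b) = cs_mul (f a) (f b),
      f (cs_one A) = cs_one A,
      forall a : A, f (cs_star a) = cs_star (f a)
    & bijective f].

Record lc_group := LCGroup {
  lg_sort :> topologicalType;
  lg_mul : lg_sort -> lg_sort -> lg_sort;
  lg_inv : lg_sort -> lg_sort;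
  lg_one : lg_sort;
  lg_mulA : associative lg_mul;
  lg_mul1 : left_id lg_one lg_mul;
  lg_mulV : forall g, lg_mul (lg_inv g) g = lg_one;
  lg_mul_cont : continuous (fun p : lg_sort * lg_sort => lg_mul p.1 p.2);
  lg_inv_cont : continuous lg_inv;
  lg_hausdorff : hausdorff_space lg_sort;
  lg_locally_compact :
    forall x : lg_sort, exists2 K : set lg_sort, compact K & nbhs x K
}.

Arguments lg_mul {G} : rename.
Arguments lg_one G : rename.

Definition cstar_action (R : realType) (G : lc_group) (A : unital_cstar R)
  (alpha : G -> A -> A) : Prop :=
  [/\ forall g, star_automorphism (alpha g),
      forall g h, alpha (lg_mul g h) = alpha g \o alpha h
    & forall a : A, continuous (fun g => alpha g a)].

Definition outer_action (R : realType) (G : lc_group) (A : unital_cstar R)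
  (alpha : G -> A -> A) : Prop :=
  forall t : G, t <> lg_one G ->
    ~ exists u : A, unitary u /\ alpha t = (fun a => cs_mul (cs_star u) (cs_mul a u)).

(* Completeness of a C-vector space with respect to the norm           *)
(* x |-> ||ip x x||^(1/2) (stated with ||ip x x|| itself, equivalently)  *)
Definition ip_complete (R : realType) (E : lmodType R[i]) (A : unital_cstar R)
  (ip : E -> E -> A) : Prop :=
  forall u : nat -> E,
    (forall eps : R[i], 0 < eps -> exists N : nat, forall m n : nat,
        (N <= m)%N -> (N <= n)%N -> `|ip (u m - u n) (u m - u n)| < eps) ->
    exists l : E, forall eps : R[i], 0 < eps -> exists N : nat, forall n : nat,
        (N <= n)%N -> `|ip (u n - l) (u n - l)| < eps.

Record hilbert_bimodule (R : realType) (B A : unital_cstar R) := HilbertBimodule {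
  hb_sort :> lmodType R[i];
  hb_lact : B -> hb_sort -> hb_sort;
  hb_ract : hb_sort -> A -> hb_sort;
  hb_lip : hb_sort -> hb_sort -> B;
  hb_rip : hb_sort -> hb_sort -> A;
  hb_ractDl : forall x y a, hb_ract (x + y) a = hb_ract x a + hb_ract y a;
  hb_ractDr : forall x a a', hb_ract x (a + a') = hb_ract x a + hb_ract x a';
  hb_ractZl : forall (k : R[i]) x a, hb_ract (k *: x) a = k *: hb_ract x a;
  hb_ractZr : forall (k : R[i]) x a, hb_ract x (k *: a) = k *: hb_ract x a;
  hb_ractM : forall x a a', hb_ract x (cs_mul a a') = hb_ract (hb_ract x a) a';
  hb_ract1 : forall x, hb_ract x (cs_one A) = x;
  hb_lactDl : forall b b' x, hb_lact (b + b') x = hb_lact b x + hb_lact b' x;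
  hb_lactDr : forall b x y, hb_lact b (x + y) = hb_lact b x + hb_lact b y;
  hb_lactZl : forall (k : R[i]) b x, hb_lact (k *: b) x = k *: hb_lact b x;
  hb_lactZr : forall (k : R[i]) b x, hb_lact b (k *: x) = k *: hb_lact b x;
  hb_lactM : forall b b' x, hb_lact (cs_mul b b') x = hb_lact b (hb_lact b' x);
  hb_lact1 : forall x, hb_lact (cs_one B) x = x;
  hb_lract : forall b x a, hb_ract (hb_lact b x) a = hb_lact b (hb_ract x a);
  hb_ripD : forall x y z, hb_rip x (y + z) = hb_rip x y + hb_rip x z;
  hb_ripZ : forall (k : R[i]) x y, hb_rip x (k *: y) = k *: hb_rip x y;
  hb_ripM : forall x y a, hb_rip x (hb_ract y a) = cs_mul (hb_rip x y) a;
  hb_ripC : forall x y, hb_rip y x = cs_star (hb_rip x y);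
  hb_rip_pos : forall x, cs_positive (hb_rip x x);
  hb_rip_def : forall x, hb_rip x x = 0 -> x = 0;
  hb_rip_complete : ip_complete hb_rip;
  hb_lipD : forall x y z, hb_lip (x + y) z = hb_lip x z + hb_lip y z;
  hb_lipZ : forall (k : R[i]) x y, hb_lip (k *: x) y = k *: hb_lip x y;
  hb_lipM : forall b x y, hb_lip (hb_lact b x) y = cs_mul b (hb_lip x y);
  hb_lipC : forall x y, hb_lip y x = cs_star (hb_lip x y);
  hb_lip_pos : forall x, cs_positive (hb_lip x x);
  hb_lip_def : forall x, hb_lip x x = 0 -> x = 0;
  hb_lip_complete : ip_complete hb_lip;
  hb_compat : forall x y z, hb_lact (hb_lip x y) z = hb_ract x (hb_rip y z)
}.

Arguments hb_lact {R B A E} : rename.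
Arguments hb_ract {R B A E} : rename.
Arguments hb_lip {R B A} E : rename.
Arguments hb_rip {R B A} E : rename.

Definition ip_full (R : realType) (E : lmodType R[i]) (A : unital_cstar R)
  (ip : E -> E -> A) : Prop :=
  forall (a : A) (eps : R[i]), 0 < eps ->
    exists s : seq (E * E), `|a - \sum_(p <- s) ip p.1 p.2| < eps.

Record compatible_action (R : realType) (G : lc_group) (A B : unital_cstar R)
  (E : hilbert_bimodule B A) (alpha : G -> A -> A) (beta : G -> B -> B)
  (eta : G -> E -> E) : Prop := CompatibleAction {
  ca_hom : forall g h, eta (lg_mul g h) = eta g \o eta h;
  ca_linear : forall g (k : R[i]) (x y : E), eta g (k *: x + y) = k *: eta g x + eta g y;
  ca_bij : forall g, bijective (eta g);
  ca_lact : forall g b x, eta g (hb_lact b x) = hb_lact (beta g b) (eta g x);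
  ca_ract : forall g x a, eta g (hb_ract x a) = hb_ract (eta g x) (alpha g a);
  ca_lip : forall g x y, hb_lip E (eta g x) (eta g y) = beta g (hb_lip E x y);
  ca_rip : forall g x y, hb_rip E (eta g x) (eta g y) = alpha g (hb_rip E x y);
  ca_cont : forall (x : E) (g : G) (eps : R[i]), 0 < eps ->
    \forall h \near g,
      `|hb_rip E (eta h x - eta g x) (eta h x - eta g x)| < eps
}.

Definition Ad (R : realType) (B A : unital_cstar R) (E : hilbert_bimodule B A)
  (u' : B) (u : A) : E -> E :=
  fun x => hb_ract (hb_lact (cs_star u') x) u.

Arguments Ad {R B A} E u' u.

Definition outer_bimod_action (R : realType) (G : lc_group) (A B : unital_cstar R)
  (E : hilbert_bimodule B A) (eta : G -> E -> E) : Prop :=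
  forall t : G, t <> lg_one G ->
    forall (u : A) (u' : B), unitary u -> unitary u' -> eta t <> Ad E u' u.

(* Main.v *)
Require Import Defs.
From mathcomp Require Import all_boot all_order all_algebra.
From mathcomp Require Import all_classical all_reals all_analysis.
From mathcomp Require Import complex.
Import Order.TTheory GRing.Theory Num.Theory.
Local Open Scope ring_scope.
Set Implicit Arguments.
Unset Strict Implicit.
Unset Printing Implicit Defensive.

Section Alg.
Variables (R : realType) (A : unital_cstar R).
Implicit Types a b c : A.

Lemma csmul0r a : cs_mul a 0 = 0.
Proof. by rewrite -(scale0r (0 : A)) cs_mulZr !scale0r. Qed.
Lemma csmul0l a : cs_mul 0 a = 0.
Proof. by rewrite -(scale0r (0 : A)) cs_mulZl !scale0r. Qed.
Lemma csmulBr a b c : cs_mul a (b - c) = cs_mul a b - cs_mul a c.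
Proof. by rewrite cs_mulDr -scaleN1r cs_mulZr scaleN1r. Qed.
Lemma csmulBl a b c : cs_mul (b - c) a = cs_mul b a - cs_mul c a.
Proof. by rewrite cs_mulDl -scaleN1r cs_mulZl scaleN1r. Qed.

Lemma kill_r c j : `|cs_one A - j| < 1 -> cs_mul c j = 0 -> c = 0.
Proof.
move=> Hj Hc; apply/eqP; apply/negPn/negP => cn0.
have E : cs_mul c (cs_one A - j) = c by rewrite csmulBr Hc cs_mul1r subr0.
have H1 : `|c| <= `|c| * `|cs_one A - j|.
  by rewrite -{1}E cs_norm_mul.
have cp : 0 < `|c| by rewrite normr_gt0.
have H2 : `|c| * `|cs_one A - j| < `|c| * 1 by rewrite ltr_pM2l.
by move: (le_lt_trans H1 H2); rewrite mulr1 ltxx.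
Qed.

Lemma kill_l c j : `|cs_one A - j| < 1 -> cs_mul j c = 0 -> c = 0.
Proof.
move=> Hj Hc; apply/eqP; apply/negPn/negP => cn0.
have E : cs_mul (cs_one A - j) c = c by rewrite csmulBl Hc cs_mul1l subr0.
have H1 : `|c| <= `|cs_one A - j| * `|c|.
  by rewrite -{1}E cs_norm_mul.
have cp : 0 < `|c| by rewrite normr_gt0.
have H2 : `|cs_one A - j| * `|c| < 1 * `|c| by rewrite ltr_pM2r.
by move: (le_lt_trans H1 H2); rewrite mul1r ltxx.
Qed.

Lemma cancel_u (u p q : A) : unitary u -> cs_mul p u = cs_mul q u -> p = q.
Proof.
move=> [_ H2] E.
by rewrite -(cs_mul1r p) -(cs_mul1r q) -H2 !cs_mulA E.
Qed.

Lemma sum_kill_r (T : Type) (f : T -> A) c (s : seq T) :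
  (forall x, cs_mul c (f x) = 0) -> cs_mul c (\sum_(p <- s) f p) = 0.
Proof.
move=> H; elim: s => [|x s IH]; first by rewrite big_nil csmul0r.
by rewrite big_cons cs_mulDr H IH addr0.
Qed.

Lemma sum_kill_l (T : Type) (f : T -> A) c (s : seq T) :
  (forall x, cs_mul (f x) c = 0) -> cs_mul (\sum_(p <- s) f p) c = 0.
Proof.
move=> H; elim: s => [|x s IH]; first by rewrite big_nil csmul0l.
by rewrite big_cons cs_mulDl H IH addr0.
Qed.

Lemma inner_core (f : A -> A) (P : A -> Prop) (u j : A) :
  unitary u -> `|cs_one A - j| < 1 ->
  (forall c, (forall r, P r -> cs_mul c r = 0) -> cs_mul c j = 0) ->
  (forall a b, f (cs_mul a b) = cs_mul (f a) (f b)) ->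
  (forall r, P r -> f r = cs_mul (cs_star u) (cs_mul r u)) ->
  (forall a r, P r -> P (cs_mul a r)) ->
  f = (fun a => cs_mul (cs_star u) (cs_mul a u)).
Proof.
move=> Hu Hj Hsum Hm Hr HP; apply: funext => a.
set X := cs_mul (f a) (cs_star u); set Y := cs_mul (cs_star u) a.
have Hc : forall r, P r -> cs_mul (X - Y) r = 0.
  move=> r Pr; rewrite csmulBl; apply/eqP; rewrite subr_eq0; apply/eqP.
  apply: (cancel_u Hu).
  have := Hr _ (HP a _ Pr); rewrite Hm (Hr _ Pr) => H.
  by rewrite /X /Y -!cs_mulA H !cs_mulA.
have XY : X = Y.
  by apply/eqP; rewrite -subr_eq0; apply/eqP; apply: (kill_r Hj); apply: Hsum.
case: Hu => H1 H2.
by rewrite -(cs_mul1r (f a)) -H1 cs_mulA -/X XY /Y cs_mulA.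
Qed.

End Alg.

Section Bimod.
Variables (R : realType) (A B : unital_cstar R) (E : hilbert_bimodule B A).

Lemma rip_ractl (z w : E) (a : A) :
  hb_rip E (hb_ract z a) w = cs_mul (cs_star a) (hb_rip E z w).
Proof. by rewrite hb_ripC hb_ripM cs_starM -hb_ripC. Qed.

Lemma lip_lactr (z w : E) (b : B) :
  hb_lip E w (hb_lact b z) = cs_mul (hb_lip E w z) (cs_star b).
Proof. by rewrite hb_lipC hb_lipM cs_starM -hb_lipC. Qed.

Lemma ract_B (z : E) (a a' : A) : hb_ract z (a - a') = hb_ract z a - hb_ract z a'.
Proof. by rewrite hb_ractDr -(scaleN1r a') hb_ractZr scaleN1r. Qed.

Lemma lact_B (z : E) (b b' : B) : hb_lact (b - b') z = hb_lact b z - hb_lact b' z.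
Proof. by rewrite hb_lactDl -(scaleN1r b') hb_lactZl scaleN1r. Qed.

Lemma rip_adj (b : B) (x y : E) : ip_full (hb_rip E) ->
  hb_rip E (hb_lact b x) y = hb_rip E x (hb_lact (cs_star b) y).
Proof.
move=> full; have [s Hs] := full (cs_one A) 1 ltr01.
apply/eqP; rewrite -subr_eq0; apply/eqP; apply: (kill_l Hs).
apply: sum_kill_l => p.
rewrite -hb_ripM ract_B.
suff -> : hb_ract p.2 (hb_rip E (hb_lact b x) y) =
          hb_ract p.2 (hb_rip E x (hb_lact (cs_star b) y)).
  by rewrite subrr -(scale0r (0:E)) hb_ripZ scale0r.
by rewrite -!hb_compat lip_lactr hb_lactM.
Qed.

Lemma lip_adj (a : A) (x y : E) : ip_full (hb_lip E) ->
  hb_lip E (hb_ract x a) y = hb_lip E x (hb_ract y (cs_star a)).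
Proof.
move=> full; have [s Hs] := full (cs_one B) 1 ltr01.
apply/eqP; rewrite -subr_eq0; apply/eqP; apply: (kill_r Hs).
apply: sum_kill_r => p.
rewrite -hb_lipM lact_B.
suff -> : hb_lact (hb_lip E (hb_ract x a) y) p.1 =
          hb_lact (hb_lip E x (hb_ract y (cs_star a))) p.1.
  by rewrite subrr -(scale0r (0:E)) hb_lipZ scale0r.
by rewrite !hb_compat -hb_ractM rip_ractl cs_starK.
Qed.

End Bimod.

Theorem proposition5p2 (R : realType) (G : lc_group) (A B : unital_cstar R)
  (alpha : G -> A -> A) (beta : G -> B -> B)
  (E : hilbert_bimodule B A) (eta : G -> E -> E) :
  cstar_action alpha -> cstar_action beta ->
  ip_full (hb_lip E) -> ip_full (hb_rip E) ->
  compatible_action alpha beta eta ->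
  outer_action alpha \/ outer_action beta ->
  outer_bimod_action eta.
Proof.
move=> [Ha _ _] [Hb _ _] fullL fullR CA Hout t tn1 u u' Hu Hu' Heta.
case: Hout => Ho.
- apply: (Ho t tn1); exists u; split => //.
  have [s Hs] := fullR (cs_one A) 1 ltr01.
  have [_ Hm _ _ _] := Ha t.
  apply: (@inner_core _ _ _ (fun r => exists x y, r = hb_rip E x y) u _ Hu Hs).
  + move=> c Hc; apply: sum_kill_r => p; apply: Hc; by exists p.1, p.2.
  + exact: Hm.
  + move=> r [x [y ->]]; rewrite -(ca_rip CA) Heta /Ad.
    rewrite rip_ractl hb_ripM rip_adj // cs_starK -hb_lactM.
    by case: Hu' => _ ->; rewrite hb_lact1.
  + move=> a r [x [y ->]]; exists (hb_ract x (cs_star a)), y.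
    by rewrite rip_ractl cs_starK.
- apply: (Ho t tn1); exists u'; split => //.
  have [s Hs] := fullL (cs_one B) 1 ltr01.
  have [_ Hm _ _ _] := Hb t.
  apply: (@inner_core _ _ _ (fun r => exists x y, r = hb_lip E x y) u' _ Hu' Hs).
  + move=> c Hc; apply: sum_kill_r => p; apply: Hc; by exists p.1, p.2.
  + exact: Hm.
  + move=> r [x [y ->]]; rewrite -(ca_lip CA) Heta /Ad.
    rewrite !hb_lract hb_lipM lip_lactr cs_starK lip_adj // -hb_ractM.
    by case: Hu => _ ->; rewrite hb_ract1.
  + move=> b r [x [y ->]]; exists (hb_lact b x), y.
    by rewrite hb_lipM.
Qed.
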